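(* In the uplink of the locally connected network with connectivity parameter $L$ and cell association constraint $|\mathcal C_i|\le N_c$, for any zero-forcing message passing decoding scheme and any set $\mathcal L\subseteq[K]$ of $L+1$ consecutive indices, at most $N_c$ messages $W_i$ with $i\in\mathcal L$ are decoded at base stations with indices in $\mathcal L$.
   Context: Network: $K$ base stations BS $1,\dots,K$ and $K$ mobile terminals MT $1,\dots,K$, single-antenna; the channel coefficient $H_{i,j}$ between MT $i$ and BS $j$ is zero iff $i\notin\{j,\dots,j+L\}$, nonzero coefficients generic (drawn from a continuous joint distribution). Uplink: BS $j$ receives $Y_j=\sum_iH_{i,j}X_i+Z_j$. MT $i$ has message $W_i$ and is associated with a set $\mathcal C_i\subseteq[K]$ of base stations, $|\mathcal C_i|\le N_c$. Zero-forcing message passing decoding: each message is decoded at at most one base station in its association set, and a decoded message is passed over the backhaul to the other base stations in its association set, which use it to cancel its interference; a base station decodes message $W_j$ only if, after removing the messages it received over the backhaul, its noiseless received signal depends on $W_j$ and on no other message. *)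

(* Defs.v *)
From HB Require Import structures.
From mathcomp Require Import all_boot all_order all_algebra.
Set Implicit Arguments. Unset Strict Implicit. Unset Printing Implicit Defensive.
Import GRing.Theory.
Local Open Scope ring_scope.

(* Indices are 0-based: MT i and BS j range over 'I_K (paper: 1..K).
   H i j is the channel coefficient between MT i and BS j.
   A decoding scheme is a sequence s of pairs (i, j), in decoding order,
   meaning "message W_i is decoded at BS j". *)

Section ZF.
Variables (R : fieldType) (K : nat).

Definition locally_connected (L : nat) (H : 'M[R]_K) : Prop :=
  forall i j : 'I_K, (H i j != 0) = ((j <= i) && (i <= j + L))%N.

(* After the messages decoded in [past], message W_k is available at BS j
   (via the backhaul, or because it was decoded there) iff W_k has been
   decoded somewhere and j is in the association set of W_k. *)
Definition available (C : 'I_K -> {set 'I_K}) (past : seq ('I_K * 'I_K))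
    (k j : 'I_K) : Prop :=
  (exists j' : 'I_K, (k, j') \in past) /\ j \in C k.

(* Zero-forcing condition: after removing the available messages, the
   noiseless received signal sum_i H i j X_i of BS j depends on W_i
   (H i j <> 0) and on no other message (every other k with H k j <> 0
   has been cancelled). *)
Definition zf_decodable (H : 'M[R]_K) (C : 'I_K -> {set 'I_K})
    (past : seq ('I_K * 'I_K)) (i j : 'I_K) : Prop :=
  H i j != 0 /\
  forall k : 'I_K, k != i -> H k j != 0 -> available C past k j.

Definition zf_mp_scheme (H : 'M[R]_K) (C : 'I_K -> {set 'I_K})
    (s : seq ('I_K * 'I_K)) : Prop :=
  uniq (map fst s) /\
  forall (s1 s2 : seq ('I_K * 'I_K)) (i j : 'I_K),
    s = s1 ++ (i, j) :: s2 -> j \in C i /\ zf_decodable H C s1 i j.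

End ZF.

(* Main.v *)
Require Import Defs.
From HB Require Import structures.
From mathcomp Require Import all_boot all_order all_algebra.
Import GRing.Theory.
Local Open Scope ring_scope.

Lemma idx_split (T : eqType) (u p1 p2 : seq T) (x : T) :
  uniq u -> u = p1 ++ x :: p2 -> index x u = size p1.
Proof.
move=> Uu E; rewrite E index_cat.
have : x \notin p1.
  move: Uu; rewrite E cat_uniq /= => /and3P [_ H _].
  by move: H; rewrite negb_or => /andP [].
by move/negbTE => ->; rewrite /= eqxx addn0.
Qed.

Lemma idx_lt (T : eqType) (u p1 p2 : seq T) (y : T) :
  u = p1 ++ p2 -> y \in p1 -> (index y u < size p1)%N.
Proof. by move=> -> Hy; rewrite index_cat Hy index_mem. Qed.

Theorem lemma2 (R : fieldType) (K L Nc : nat) (H : 'M[R]_K)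
    (C : 'I_K -> {set 'I_K}) (s : seq ('I_K * 'I_K)) (a : nat) :
  locally_connected L H ->
  (forall i : 'I_K, (#|C i| <= Nc)%N) ->
  zf_mp_scheme H C s ->
  (a + L < K)%N ->
  (#|[set i : 'I_K | ((a <= i) && (i <= a + L))%N &&
        [exists j : 'I_K, ((a <= j) && (j <= a + L))%N && ((i, j) \in s)]]|
     <= Nc)%N.
Proof.
move=> Hlc HC [Hu Hs] haL.
set m := Ordinal haL.
set S := [set i : 'I_K | _].
have dec : forall i j, (i, j) \in s -> exists s1 s2,
    s = s1 ++ (i, j) :: s2 /\ j \in C i /\ zf_decodable H C s1 i j.
  move=> i j /splitPr E; case: E Hs => s1 s2 Hs'.
  by exists s1, s2; split => //; apply: Hs'.
pose f (i : 'I_K) := odflt i [pick j : 'I_K | ((a <= j) && (j <= a + L))%N && ((i, j) \in s)].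
have fP : forall i, i \in S -> ((a <= f i) && (f i <= a + L))%N && ((i, f i) \in s).
  move=> i; rewrite inE => /andP [_ /existsP [j Hj]].
  rewrite /f; case: pickP => [k Hk //| N]; by move: (N j); rewrite Hj.
have inj : {in S &, injective f}.
  move=> i1 i2 H1 H2 Ef; apply/eqP/negPn/negP => Hne.
  move: (fP _ H1) (fP _ H2) => /andP [_ M1] /andP [_ M2].
  rewrite -Ef in M2.
  have [s1 [s2 [E1 [_ [Z1 Z1']]]]] := dec _ _ M1.
  have [t1 [t2 [E2 [_ [Z2 Z2']]]]] := dec _ _ M2.
  have Hne' : i2 != i1 by rewrite eq_sym.
  have A1 : i2 \in map fst s1.
    have [[j' Hj'] _] := Z1' i2 Hne' Z2.
    by apply/mapP; exists (i2, j').
  have A2 : i1 \in map fst t1.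
    have [[j' Hj'] _] := Z2' i1 Hne Z1.
    by apply/mapP; exists (i1, j').
  have e1 : map fst s = map fst s1 ++ i1 :: map fst s2 by rewrite E1 map_cat.
  have e2 : map fst s = map fst t1 ++ i2 :: map fst t2 by rewrite E2 map_cat.
  have := @idx_split _ _ _ _ _ Hu e1; have := @idx_split _ _ _ _ _ Hu e2.
  have := @idx_lt _ _ _ _ _ e1 A1; have := @idx_lt _ _ _ _ _ e2 A2.
  move=> a1 a2 b1 b2; move: a1 a2; rewrite b1 b2 => a1 a2.
  by move: (ltn_trans a1 a2); rewrite ltnn.
have sub : f @: S \subset C m.
  apply/subsetP => j /imsetP [i Hi ->].
  move: (fP _ Hi) => /andP [/andP [Ha Hb] M].
  have [s1 [s2 [E [Ci [_ Z]]]]] := dec _ _ M.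
  have [Emi|Hmi] := eqVneq m i; first by rewrite Emi.
  have Hm : H m (f i) != 0.
    by rewrite Hlc /= Hb /= leq_add2r.
  by have [_ ->] := Z m Hmi Hm.
rewrite -(card_in_imset inj).
exact: leq_trans (subset_leq_card sub) (HC m).
Qed.
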